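(* Let $V(x)$ be a real function, $\epsilon$ a real constant, and let $w(x)$ be a solution of the Riccati equation $$w'+w^2=V(x)-\epsilon .$$ Let $\gamma(x)$ be a never vanishing differentiable function defined on the domain of $V(x)$. If $v(x)$ is a solution of the Riccati equation $$v'+v^2=V(x)+\frac{1}{\gamma^2(x)}-\epsilon$$ which is defined on the same domain as $w(x)$ and such that $w(x)-v(x)$ does not vanish, then the function $$\overline w(x)=-v(x)-\frac{1/\gamma^2(x)}{w(x)-v(x)}+\frac{\gamma'(x)}{\gamma(x)}$$ is a solution of the Riccati equation $$\overline w'+\overline w^{\,2}=V(x)-2\left(\frac{\gamma'}{\gamma}\,v+v'\right)+\frac{\gamma''}{\gamma}-\epsilon .$$
   Context: Primes denote derivatives with respect to the real independent variable $x$. The function $\gamma$ is implicitly required to be twice differentiable, since $\gamma''$ appears in the conclusion. *)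

(* Defs.v *)
From Stdlib Require Import Reals.
From Coquelicot Require Import Coquelicot.
Open Scope R_scope.

(* Main.v *)
Require Import Defs.
From Stdlib Require Import Reals Lra.
From Coquelicot Require Import Coquelicot.
Open Scope R_scope.

Theorem theorem2 (D : R -> Prop) (V w v gamma : R -> R) (eps : R) :
  open D ->
  (* w solves w' + w^2 = V - eps on D *)
  (forall x, D x -> ex_derive w x /\ Derive w x + (w x) ^ 2 = V x - eps) ->
  (* gamma never vanishes and is twice differentiable on D *)
  (forall x, D x -> gamma x <> 0) ->
  (forall x, D x -> ex_derive gamma x /\ ex_derive (Derive gamma) x) ->
  (* v solves v' + v^2 = V + 1/gamma^2 - eps on D *)
  (forall x, D x ->
     ex_derive v x /\ Derive v x + (v x) ^ 2 = V x + 1 / (gamma x) ^ 2 - eps) ->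
  (* w - v does not vanish *)
  (forall x, D x -> w x - v x <> 0) ->
  let wbar := fun x => - v x - (1 / (gamma x) ^ 2) / (w x - v x)
                       + Derive gamma x / gamma x in
  forall x, D x ->
    ex_derive wbar x /\
    Derive wbar x + (wbar x) ^ 2 =
      V x - 2 * (Derive gamma x / gamma x * v x + Derive v x)
      + Derive (Derive gamma) x / gamma x - eps.
Proof.
  intros _ Hw Hg0 Hg Hv Hwv wbar x Dx.
  destruct (Hw x Dx) as [dw ew].
  destruct (Hv x Dx) as [dv ev].
  destruct (Hg x Dx) as [dg dg2].
  pose proof (Hg0 x Dx) as g0.
  pose proof (Hwv x Dx) as wv0.
  assert (HD : is_derive wbar x
    (- Derive v x + (2 * gamma x * Derive gamma x * (w x - v x)
       + gamma x ^ 2 * (Derive w x - Derive v x)) / (gamma x ^ 2 * (w x - v x)) ^ 2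
     + (Derive (Derive gamma) x * gamma x - Derive gamma x ^ 2) / gamma x ^ 2)).
  { unfold wbar. auto_derive.
    replace (w x + - v x) with (w x - v x) by ring.
    repeat split; auto; try (rewrite Rmult_1_r; now apply Rmult_integral_contrapositive).
    change (Derive (fun x0 => v x0) x) with (Derive v x); change (Derive (fun x0 => w x0) x) with (Derive w x); change (Derive (fun x0 => gamma x0) x) with (Derive gamma x); change (Derive (fun x0 => Derive gamma x0) x) with (Derive (Derive gamma) x).
    field. split; auto. }
  split. { eexists; exact HD. }
  rewrite (is_derive_unique _ _ _ HD).
  unfold wbar.
  assert (Ew : Derive w x = V x - eps - w x ^ 2) by lra.
  assert (Ev : Derive v x = V x + 1 / gamma x ^ 2 - eps - v x ^ 2) by lra.
  rewrite Ew, Ev. field. split; auto.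
Qed.
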